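(* Let $S$ be a solid and let $x,y\in S^*$. If $e(x)y\le e(y)x$, then $R(x)\le R(y)$.
   Context: A solid is a set $S$ with two binary operations $+$ and $\cdot$ (written $xy$) and a binary relation $\le$ satisfying the following axioms (all variables range over $S$). (A1) $+$ is associative and commutative. (A2) For each $x$ there is $e$ with $x+e=x$ such that $e+f=e$ for every $f$ with $x+f=x$; this $e$ is unique and is denoted $e(x)$ (the magnitude of $x$). An element $x$ with $x=e(x)$ is called a magnitude. (A3) For each $x$ there is $s$ with $x+s=e(x)$ and $e(s)=e(x)$; it is unique and denoted $-x$; write $x-y$ for $x+(-y)$. (A4) $e(x+y)=e(x)$ or $e(x+y)=e(y)$. (M1) $\cdot$ is associative and commutative. (M2) For each $x\neq e(x)$ there is $u$ with $xu=x$ such that $uv=u$ for every $v$ with $xv=x$; it is unique and denoted $u(x)$. (M3) For each $x\ne e(x)$ there is $d$ with $xd=u(x)$ and $u(d)=u(x)$; it is unique and denoted $x^{-1}$; write $y/x$ for $yx^{-1}$. (M4) If $x\neq e(x)$ and $y\ne e(y)$ then $u(xy)=u(x)$ or $u(xy)=u(y)$. (O1) $\le$ is a total order (reflexive, antisymmetric, transitive, total); $x<y$ means $x\le y$ and $x\ne y$. (O2) $x\le y\Rightarrow x+z\le y+z$. (O3) $y+e(x)=e(x)\Rightarrow (y\le e(x)$ and $-y\le e(x))$. (O4) $(e(x)<x$ and $y\le z)\Rightarrow xy\le xz$. (O5) $e(y)\le y\le z\Rightarrow e(x)y\le e(x)z$. (AM1) For all $x,y$ there is $z$ with $e(x)y=e(z)$.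 (AM2) $e(xy)=e(x)y+e(y)x$. (AM3) If $x\ne e(x)$ then $e(u(x))=e(x)/x$. (AM4) (distributivity axiom) $xy+xz=x(y+z)+e(x)y+e(x)z$. (AM5) $-(xy)=(-x)y$. (E1) There is $m$ with $m+x=x$ for all $x$; it is unique, called zero and denoted $0$. (E2) There is $u$ with $ux=x$ for all $x$; it is unique, called one and denoted $1$. (E3) There is $M$ with $e(x)+M=M$ for all $x$. (E4) There is $x$ with $e(x)\ne 0$ and $e(x)\ne M$. (E5) For every $x$ there is $a$ with $x=a+e(x)$ and $e(a)=0$. (E6) If $x,y$ are magnitudes with $x<y$, there is $z$ with $z\ne e(z)$ and $x<z<y$. Further notation: $S^*=\{x\in S: x\ne e(x)\}$ (zeroless elements). $x$ is positive if $e(x)\le x$ and negative if $x<e(x)$; $|x|=x$ if $x$ is positive and $|x|=-x$ if $x$ is negative. $x$ is precise if $e(x)=0$. The relative uncertainty $R(x)$ is $e(u(x))$ if $x\ne e(x)$, and $M$ (from (E3)) if $x=e(x)$. *)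

(* Defs.v *)
From Stdlib Require Import ClassicalEpsilon.

(* The operations e (magnitude), opp (-x), u (unit of x), inv (x^{-1})
   are fields of the structure, constrained by exactly the defining
   properties of axioms (A2), (A3), (M2), (M3).  u and inv are only
   constrained on zeroless elements x <> e x.  The constants 0, 1 and M
   of (E1)-(E3) are also fields. *)
Record solid (S : Type) := Solid {
  add : S -> S -> S;
  mul : S -> S -> S;
  le  : S -> S -> Prop;
  e   : S -> S;
  opp : S -> S;
  u   : S -> S;
  inv : S -> S;
  zero : S;
  one  : S;
  big  : S;
  A1_assoc : forall x y z, add x (add y z) = add (add x y) z;
  A1_comm  : forall x y, add x y = add y x;
  A2 : forall x, add x (e x) = x /\ (forall f, add x f = x -> add (e x) f = e x);
  A3 : forall x, add x (opp x) = e x /\ e (opp x) = e x;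
  A4 : forall x y, e (add x y) = e x \/ e (add x y) = e y;
  M1_assoc : forall x y z, mul x (mul y z) = mul (mul x y) z;
  M1_comm  : forall x y, mul x y = mul y x;
  M2 : forall x, x <> e x ->
         mul x (u x) = x /\ (forall v, mul x v = x -> mul (u x) v = u x);
  M3 : forall x, x <> e x -> mul x (inv x) = u x /\ u (inv x) = u x;
  M4 : forall x y, x <> e x -> y <> e y -> u (mul x y) = u x \/ u (mul x y) = u y;
  O1_refl  : forall x, le x x;
  O1_antisym : forall x y, le x y -> le y x -> x = y;
  O1_trans : forall x y z, le x y -> le y z -> le x z;
  O1_total : forall x y, le x y \/ le y x;
  O2 : forall x y z, le x y -> le (add x z) (add y z);
  O3 : forall x y, add y (e x) = e x -> le y (e x) /\ le (opp y) (e x);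
  O4 : forall x y z, (le (e x) x /\ e x <> x) -> le y z -> le (mul x y) (mul x z);
  O5 : forall x y z, le (e y) y -> le y z -> le (mul (e x) y) (mul (e x) z);
  AM1 : forall x y, exists z, mul (e x) y = e z;
  AM2 : forall x y, e (mul x y) = add (mul (e x) y) (mul (e y) x);
  AM3 : forall x, x <> e x -> e (u x) = mul (e x) (inv x);
  AM4 : forall x y z, add (mul x y) (mul x z)
                      = add (add (mul x (add y z)) (mul (e x) y)) (mul (e x) z);
  AM5 : forall x y, opp (mul x y) = mul (opp x) y;
  E1 : forall x, add zero x = x;
  E2 : forall x, mul one x = x;
  E3 : forall x, add (e x) big = big;
  E4 : exists x, e x <> zero /\ e x <> big;
  E5 : forall x, exists a, x = add a (e x) /\ e a = zero;
  E6 : forall x y, x = e x -> y = e y -> (le x y /\ x <> y) ->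
         exists z, z <> e z /\ (le x z /\ x <> z) /\ (le z y /\ z <> y)
}.

Arguments add {S} _ _ _.
Arguments mul {S} _ _ _.
Arguments le {S} _ _ _.
Arguments e {S} _ _.
Arguments opp {S} _ _.
Arguments u {S} _ _.
Arguments inv {S} _ _.
Arguments zero {S} _.
Arguments one {S} _.
Arguments big {S} _.

Definition relunc {S : Type} (T : solid S) (x : S) : S :=
  if excluded_middle_informative (x <> e T x) then e T (u T x) else big T.

(* Main.v *)
Require Import Defs.
From Stdlib Require Import Classical ClassicalEpsilon.

Definition pos {S} (T : solid S) x := le T (e T x) x /\ e T x <> x.

Lemma addC {S} (T : solid S) x y : add T x y = add T y x.
Proof. apply A1_comm. Qed.
Lemma addA {S} (T : solid S) x y z : add T x (add T y z) = add T (add T x y) z.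
Proof. apply A1_assoc. Qed.
Lemma mulC {S} (T : solid S) x y : mul T x y = mul T y x.
Proof. apply M1_comm. Qed.
Lemma mulA {S} (T : solid S) x y z : mul T x (mul T y z) = mul T (mul T x y) z.
Proof. apply M1_assoc. Qed.

Lemma add_e {S} (T : solid S) x : add T x (e T x) = x.
Proof. apply (A2 _ T x). Qed.

Lemma e_idem_add {S} (T : solid S) x : add T (e T x) (e T x) = e T x.
Proof. destruct (A2 _ T x) as [H1 H2]. apply H2. exact H1. Qed.

Lemma e_e {S} (T : solid S) x : e T (e T x) = e T x.
Proof.
  set (m := e T x).
  destruct (A2 _ T m) as [H1 H2].
  destruct (A2 _ T x) as [H3 H4].
  assert (Hm : add T m m = m) by apply e_idem_add.
  assert (E1' : add T (e T m) m = e T m) by (apply H2; exact Hm).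
  assert (E2' : add T x (e T m) = x).
  { rewrite <- H3 at 1. fold m. rewrite <- addA, H1. exact H3. }
  assert (E3' : add T m (e T m) = m) by (apply H4; exact E2').
  rewrite <- E1' at 1. rewrite addC. exact E3'.
Qed.

Lemma mag_add_self {S} (T : solid S) t : e T t = t -> add T t t = t.
Proof. intro H. rewrite <- H. apply e_idem_add. Qed.

Lemma e_zero {S} (T : solid S) : e T (zero T) = zero T.
Proof.
  pose proof (add_e T (zero T)) as H. rewrite (E1 _ T) in H. exact H.
Qed.

Lemma zero_le_e {S} (T : solid S) x : le T (zero T) (e T x).
Proof. apply (O3 _ T x (zero T)). apply E1. Qed.

Lemma zero_le_mag {S} (T : solid S) t : e T t = t -> le T (zero T) t.
Proof. intro H. rewrite <- H. apply zero_le_e. Qed.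

Lemma mag_le_add {S} (T : solid S) a b : e T a = a -> e T b = b -> le T a b -> add T a b = b.
Proof.
  intros Ha Hb Hab. apply (O1_antisym _ T).
  - pose proof (O2 _ T a b b Hab) as H. rewrite (mag_add_self T b Hb) in H. exact H.
  - pose proof (O2 _ T (zero T) a b (zero_le_mag T a Ha)) as H.
    rewrite (E1 _ T b) in H. exact H.
Qed.

Lemma absorb_le {S} (T : solid S) y x : add T y (e T x) = e T x -> le T y (e T x).
Proof. intro H. apply (O3 _ T x y H). Qed.

Lemma opp_mag {S} (T : solid S) t : e T t = t -> opp T t = t.
Proof.
  intro Ht. destruct (A3 _ T t) as [H1 H2].
  pose proof (add_e T (opp T t)) as H3. rewrite H2, Ht in H3.
  rewrite Ht in H1. rewrite <- H3. rewrite addC. exact H1.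
Qed.

Lemma mag_mul_l {S} (T : solid S) t y : e T t = t -> e T (mul T t y) = mul T t y.
Proof.
  intro Ht. destruct (AM1 _ T t y) as [z Hz]. rewrite Ht in Hz. rewrite Hz. apply e_e.
Qed.

Lemma mag_mul_r {S} (T : solid S) t y : e T t = t -> e T (mul T y t) = mul T y t.
Proof. intro Ht. rewrite mulC. apply mag_mul_l; auto. Qed.

Lemma e_mul_mag {S} (T : solid S) x y : e T (mul T (e T x) y) = mul T (e T x) y.
Proof. apply mag_mul_l. apply e_e. Qed.

Lemma opp_zeroless {S} (T : solid S) x : x <> e T x -> opp T x <> e T (opp T x).
Proof.
  intros Hx H. apply Hx. destruct (A3 _ T x) as [H1 H2]. rewrite H2 in H.
  rewrite <- (add_e T x) at 1. rewrite <- H at 1. exact H1.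
Qed.

Lemma sign_opp {S} (T : solid S) x : x <> e T x -> le T x (e T x) -> pos T (opp T x).
Proof.
  intros Hx Hle. split.
  - pose proof (O2 _ T _ _ (opp T x) Hle) as H.
    destruct (A3 _ T x) as [H1 H2]. rewrite H1 in H. rewrite H2.
    rewrite addC, <- H2, add_e in H. rewrite <- H2. exact H.
  - intro H. apply (opp_zeroless T x Hx). auto.
Qed.

Lemma mul_le_mags {S} (T : solid S) z A B :
  e T A = A -> e T B = B -> le T A B -> le T (mul T z A) (mul T z B).
Proof.
  intros HA HB Hle.
  destruct (classic (z = e T z)) as [Hz | Hz].
  - rewrite Hz. apply (O5 _ T). rewrite HA. apply (O1_refl _ T). exact Hle.
  - destruct (O1_total _ T (e T z) z) as [H | H].
    + apply (O4 _ T); auto.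
    + pose proof (O4 _ T _ _ _ (sign_opp T z Hz H) Hle) as H2.
      rewrite <- !(AM5 _ T) in H2.
      rewrite !opp_mag in H2; auto; apply mag_mul_r; auto.
Qed.

Lemma e_add {S} (T : solid S) x y : e T (add T x y) = add T (e T x) (e T y).
Proof.
  destruct (A2 _ T (add T x y)) as [_ H].
  assert (Hx : add T (e T (add T x y)) (e T x) = e T (add T x y)).
  { apply H. rewrite <- addA, (addC T y), addA, add_e. reflexivity. }
  assert (Hy : add T (e T (add T x y)) (e T y) = e T (add T x y)).
  { apply H. rewrite <- addA, add_e. reflexivity. }
  destruct (A4 _ T x y) as [E | E]; rewrite E in *.
  - exact (eq_sym Hy).
  - rewrite addC. exact (eq_sym Hx).
Qed.

Lemma opp_unique {S} (T : solid S) w s :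
  add T w s = e T w -> e T s = e T w -> s = opp T w.
Proof.
  intros H1 H2. destruct (A3 _ T w) as [H3 H4].
  rewrite <- (add_e T s). rewrite H2, <- H3, addA, (addC T s), H1.
  rewrite <- H4, addC. apply add_e.
Qed.

Lemma opp_add {S} (T : solid S) x y : opp T (add T x y) = add T (opp T x) (opp T y).
Proof.
  symmetry. apply opp_unique.
  - destruct (A3 _ T x) as [Hx _]. destruct (A3 _ T y) as [Hy _].
    rewrite e_add. rewrite <- Hx, <- Hy.
    rewrite !addA. f_equal. rewrite <- !addA. f_equal. apply addC.
  - rewrite !e_add. destruct (A3 _ T x) as [_ Hx]. destruct (A3 _ T y) as [_ Hy].
    rewrite Hx, Hy. reflexivity.
Qed.

Lemma opp_absorb {S} (T : solid S) c t : e T t = t -> add T c t = t -> add T (opp T c) t = t.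
Proof.
  intros Ht H. pose proof (f_equal (opp T) H) as H'. rewrite opp_add in H'. rewrite (opp_mag T t Ht) in H'. exact H'.
Qed.

Lemma one_zeroless {S} (T : solid S) w : w <> e T w -> one T <> e T (one T).
Proof.
  intros Hw H. apply Hw. rewrite <- (E2 _ T w). rewrite H. symmetry. apply e_mul_mag.
Qed.

Lemma not_one_le_e1 {S} (T : solid S) : one T <> e T (one T) -> ~ le T (one T) (e T (one T)).
Proof.
  intros H1 Hle. pose proof (sign_opp T _ H1 Hle) as Hp.
  pose proof (O4 _ T _ _ _ Hp Hle) as H.
  rewrite (mulC T (opp T (one T)) (one T)), (E2 _ T) in H.
  rewrite <- (AM5 _ T), (E2 _ T), (opp_mag T (e T (one T)) (e_e T _)) in H.
  destruct Hp as [Hp1 Hp2]. apply Hp2. apply (O1_antisym _ T); auto.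
  destruct (A3 _ T (one T)) as [_ E]. rewrite E. exact H.
Qed.

Lemma pos_one {S} (T : solid S) : one T <> e T (one T) -> le T (e T (one T)) (one T).
Proof.
  intro H1. destruct (O1_total _ T (e T (one T)) (one T)) as [H|H]; auto.
  exfalso. exact (not_one_le_e1 T H1 H).
Qed.

Lemma e_one {S} (T : solid S) : one T <> e T (one T) -> e T (one T) = zero T.
Proof.
  intro H1. set (N := e T (one T)).
  destruct (E5 _ T (one T)) as [p [Hp Ep]]. fold N in Hp.
  assert (HN : e T N = N) by apply e_e.
  assert (Np : mul T N p = zero T).
  { pose proof (AM2 _ T (one T) p) as H. rewrite (E2 _ T), Ep in H.
    rewrite (mulC T (zero T) (one T)), (E2 _ T), addC, (E1 _ T) in H.
    symmetry. exact H. }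
  assert (NNN : le T N (mul T N N)).
  { pose proof (AM4 _ T N p N) as H. rewrite HN, <- Hp, Np in H.
    rewrite (mulC T N (one T)), (E2 _ T) in H.
    rewrite (E1 _ T), (addC T N (zero T)), (E1 _ T) in H.
    assert (Hm : e T (mul T N N) = mul T N N) by (apply mag_mul_l; auto).
    rewrite <- Hm. apply absorb_le. rewrite Hm. symmetry. exact H. }
  destruct (O1_total _ T N p) as [H|H].
  - pose proof (O5 _ T (one T) N p) as H5. fold N in H5. rewrite HN in H5.
    specialize (H5 (O1_refl _ T N) H). rewrite Np in H5.
    apply (O1_antisym _ T).
    + apply (O1_trans _ T _ _ _ NNN H5).
    + apply zero_le_mag; auto.
  - exfalso. apply (not_one_le_e1 T H1). fold N.
    pose proof (O2 _ T _ _ N H) as H2. rewrite <- Hp, mag_add_self in H2; auto.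
Qed.


Lemma mul1r {S} (T : solid S) x : mul T x (one T) = x.
Proof. rewrite mulC. apply E2. Qed.

Lemma mul_opp_l {S} (T : solid S) x y : mul T (opp T x) y = opp T (mul T x y).
Proof. symmetry. apply AM5. Qed.

Lemma mul_opp_r {S} (T : solid S) x y : mul T y (opp T x) = opp T (mul T x y).
Proof. rewrite mulC. apply mul_opp_l. Qed.

Lemma idem_eR {S} (T : solid S) a : a <> e T a -> mul T a a = a -> mul T a (e T a) = e T a.
Proof.
  intros Ha Haa. pose proof (AM2 _ T a a) as H. rewrite Haa in H.
  rewrite mag_add_self in H by apply e_mul_mag. rewrite mulC. symmetry. exact H.
Qed.

Lemma idem_pos {S} (T : solid S) a : a <> e T a -> mul T a a = a -> pos T a.
Proof.
  intros Ha Haa. destruct (O1_total _ T (e T a) a) as [H|H].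
  - split; auto.
  - exfalso. pose proof (sign_opp T a Ha H) as Hp.
    pose proof (O4 _ T _ _ _ Hp H) as H2.
    rewrite !mul_opp_l, Haa, (mulC T a (e T a)), <- (mulC T a), (idem_eR T a Ha Haa),
      (opp_mag T (e T a) (e_e T a)) in H2.
    destruct Hp as [Hp1 Hp2]. destruct (A3 _ T a) as [_ E]. rewrite E in Hp1, Hp2.
    apply Hp2. apply (O1_antisym _ T); auto.
Qed.

Lemma idem_R_le1 {S} (T : solid S) a : a <> e T a -> mul T a a = a -> le T (e T a) (one T).
Proof.
  intros Ha Haa. destruct (O1_total _ T (e T a) (one T)) as [H|H]; auto.
  exfalso. pose proof (O4 _ T _ _ _ (idem_pos T a Ha Haa) H) as H2.
  rewrite mul1r, (idem_eR T a Ha Haa) in H2.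
  apply Ha. apply (O1_antisym _ T); auto. apply (idem_pos T a Ha Haa).
Qed.

Lemma idem_one_le {S} (T : solid S) a : e T (one T) = zero T ->
  a <> e T a -> mul T a a = a -> le T (one T) a.
Proof.
  intros H1 Ha Haa. set (R := e T a).
  assert (HR : e T R = R) by apply e_e.
  destruct (O1_total _ T (one T) a) as [H|H]; [exact H|].
  set (d := add T (one T) (opp T a)).
  assert (HdR : add T d R = d).
  { unfold d. rewrite <- addA. destruct (A3 _ T a) as [_ E]. unfold R. rewrite <- E, add_e. reflexivity. }
  assert (HRed : le T R (e T d)).
  { apply absorb_le. rewrite addC. apply (A2 _ T d). exact HdR. }
  assert (Hed : e T d = R).
  { destruct (A4 _ T (one T) (opp T a)) as [E|E]; fold d in E.
    - rewrite E, H1 in HRed. rewrite E, H1. apply (O1_antisym _ T).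
      + apply zero_le_mag; auto.
      + exact HRed.
    - rewrite E. destruct (A3 _ T a) as [_ E']. exact E'. }
  assert (HRd : le T R d).
  { pose proof (O2 _ T _ _ (opp T a) H) as H2. destruct (A3 _ T a) as [E _]. rewrite E in H2. exact H2. }
  destruct (classic (d = R)) as [E|E].
  - assert (E2' : add T (one T) R = a).
    { assert (Hx : add T a d = a) by (rewrite E; apply add_e).
      rewrite <- Hx. unfold d. rewrite addA, (addC T a (one T)), <- addA.
      destruct (A3 _ T a) as [E3 _]. rewrite E3. reflexivity. }
    rewrite <- E2'. pose proof (O2 _ T _ _ (one T) (zero_le_mag T R HR)) as H2.
    rewrite (E1 _ T) in H2. rewrite addC. exact H2.
  - exfalso.
    assert (Hpd : pos T d) by (split; rewrite Hed; auto).
    assert (Had : add T (mul T a d) R = R).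
    { pose proof (AM4 _ T a (one T) (opp T a)) as H2. fold d in H2. fold R in H2.
      rewrite !mul1r, mul_opp_r, Haa in H2. destruct (A3 _ T a) as [E3 _]. rewrite E3 in H2.
      fold R in H2. rewrite mul_opp_r in H2. unfold R in H2.
      rewrite (idem_eR T a Ha Haa) in H2. fold R in H2. rewrite (opp_mag T R HR) in H2.
      rewrite <- addA, (mag_add_self T R HR) in H2. symmetry. exact H2. }
    assert (Hadle : le T (mul T a d) R) by (apply absorb_le; exact Had).
    destruct (O1_total _ T a d) as [H2|H2].
    + pose proof (O4 _ T _ _ _ (idem_pos T a Ha Haa) H2) as H3. rewrite Haa in H3.
      apply Ha. apply (O1_antisym _ T).
      * apply (O1_trans _ T _ _ _ H3 Hadle).
      * apply (idem_pos T a Ha Haa).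
    + pose proof (O4 _ T _ _ _ Hpd H2) as H3. rewrite (mulC T d a) in H3.
      pose proof (O1_trans _ T _ _ _ H3 Hadle) as Hdd.
      pose proof (AM4 _ T d (one T) (opp T a)) as H4. fold d in H4.
      rewrite Hed, !mul1r, !mul_opp_r in H4. unfold R in H4.
      rewrite (idem_eR T a Ha Haa) in H4. fold R in H4. rewrite (opp_mag T R HR) in H4.
      rewrite <- addA, (mag_add_self T R HR), (mulC T a d) in H4.
      assert (Hopp : add T (opp T (mul T d a)) R = R).
      { apply opp_absorb; auto. rewrite mulC. exact Had. }
      assert (Hd2 : add T d (opp T (mul T d a)) = d).
      { rewrite <- HdR at 1. rewrite <- addA, (addC T R), Hopp. exact HdR. }
      rewrite Hd2 in H4.
      pose proof (O2 _ T _ _ R Hdd) as H5. rewrite (mag_add_self T R HR), <- H4 in H5.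
      apply E. apply (O1_antisym _ T); auto.
Qed.

Lemma idem_le_1R {S} (T : solid S) a : e T (one T) = zero T ->
  a <> e T a -> mul T a a = a -> le T a (add T (one T) (e T a)).
Proof.
  intros H1 Ha Haa. set (R := e T a).
  assert (HR : e T R = R) by apply e_e.
  destruct (O1_total _ T a (add T (one T) R)) as [H|H]; [exact H|].
  set (c := add T a (opp T (one T))).
  destruct (classic (c = R)) as [E|E].
  - assert (Hx : add T c (one T) = a).
    { unfold c. rewrite <- addA, (addC T (opp T (one T))).
      destruct (A3 _ T (one T)) as [E3 _]. rewrite E3, H1, addC. apply E1. }
    rewrite <- Hx, E, addC. apply O1_refl.
  - exfalso.
    assert (HcR : add T c R = c).
    { unfold c. rewrite <- addA, (addC T (opp T (one T)) R), addA. unfold R. rewrite add_e. reflexivity. }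
    assert (HRec : le T R (e T c)).
    { apply absorb_le. rewrite addC. apply (A2 _ T c). exact HcR. }
    assert (Hec : e T c = R).
    { destruct (A4 _ T a (opp T (one T))) as [E'|E']; fold c in E'.
      - exact E'.
      - destruct (A3 _ T (one T)) as [_ E3]. rewrite E3, H1 in E'.
        rewrite E' in HRec. rewrite E'. apply (O1_antisym _ T).
        + apply zero_le_mag; auto.
        + exact HRec. }
    assert (HRc : le T R c).
    { pose proof (O2 _ T _ _ (opp T (one T)) H) as H2. fold c in H2.
      rewrite <- addA, (addC T R), addA in H2. destruct (A3 _ T (one T)) as [E3 _].
      rewrite E3, H1, (E1 _ T) in H2. exact H2. }
    assert (Hpc : pos T c) by (split; rewrite Hec; auto).
    assert (Hac : add T (mul T a c) R = R).
    { pose proof (AM4 _ T a a (opp T (one T))) as H2. fold c in H2. fold R in H2.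
      rewrite Haa, !mul_opp_r, !(E2 _ T) in H2. destruct (A3 _ T a) as [E3 _]. rewrite E3 in H2.
      fold R in H2. rewrite (mulC T R a) in H2. unfold R in H2.
      rewrite (idem_eR T a Ha Haa) in H2. fold R in H2. rewrite (opp_mag T R HR) in H2.
      rewrite <- addA, (mag_add_self T R HR) in H2. symmetry. exact H2. }
    assert (Hacle : le T (mul T a c) R) by (apply absorb_le; exact Hac).
    destruct (O1_total _ T a c) as [H2|H2].
    + pose proof (O4 _ T _ _ _ (idem_pos T a Ha Haa) H2) as H3. rewrite Haa in H3.
      apply Ha. apply (O1_antisym _ T).
      * apply (O1_trans _ T _ _ _ H3 Hacle).
      * apply (idem_pos T a Ha Haa).
    + pose proof (O4 _ T _ _ _ Hpc H2) as H3. rewrite (mulC T c a) in H3.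
      pose proof (O1_trans _ T _ _ _ H3 Hacle) as Hcc.
      pose proof (AM4 _ T c a (opp T (one T))) as H4. fold c in H4.
      rewrite Hec, !mul_opp_r, !(E2 _ T), (mulC T R a) in H4. unfold R in H4.
      rewrite (idem_eR T a Ha Haa) in H4. fold R in H4. rewrite (opp_mag T R HR) in H4.
      rewrite <- addA, (mag_add_self T R HR) in H4.
      assert (Hoc : add T (opp T c) R = opp T c).
      { destruct (A3 _ T c) as [_ E3]. rewrite Hec in E3. rewrite <- E3 at 1. apply add_e. }
      assert (Hca : add T (mul T c a) R = R) by (rewrite mulC; exact Hac).
      assert (Hl : add T (mul T c a) (opp T c) = opp T c).
      { rewrite <- Hoc at 1. rewrite (addC T (opp T c) R), addA, Hca, addC. exact Hoc. }
      rewrite Hl in H4.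
      assert (H0cc : le T (zero T) (mul T c c)).
      { pose proof (O4 _ T _ _ _ Hpc HRc) as H5. apply (O1_trans _ T _ _ _ (zero_le_mag T _ (mag_mul_r T R c HR)) H5). }
      pose proof (O2 _ T _ _ R H0cc) as H5. rewrite (E1 _ T), <- H4 in H5.
      pose proof (O2 _ T _ _ (opp T c) HRc) as H6. destruct (A3 _ T c) as [E3 E4].
      rewrite E3, Hec, addC, Hoc in H6.
      assert (Hz : opp T c = e T (opp T c)).
      { rewrite E4, Hec. apply (O1_antisym _ T); auto. }
      apply (opp_zeroless T c); auto. rewrite Hec. auto.
Qed.

Lemma idem_lower {S} (T : solid S) a t : one T <> e T (one T) ->
  a <> e T a -> mul T a a = a -> e T t = t -> le T t (mul T t a).
Proof.
  intros H1z Ha Haa Ht.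
  pose proof (O5 _ T t (one T) a (pos_one T H1z) (idem_one_le T a (e_one T H1z) Ha Haa)) as H.
  rewrite Ht, mul1r in H. exact H.
Qed.

Lemma idem_upper {S} (T : solid S) a t : one T <> e T (one T) ->
  a <> e T a -> mul T a a = a -> e T t = t -> le T (mul T t a) t.
Proof.
  intros H1z Ha Haa Ht. set (R := e T a). assert (HR : e T R = R) by apply e_e.
  pose proof (O5 _ T t a (add T (one T) R) (proj1 (idem_pos T a Ha Haa))
     (idem_le_1R T a (e_one T H1z) Ha Haa)) as H. rewrite Ht in H.
  pose proof (O5 _ T t R (one T)) as H2. rewrite HR, Ht, mul1r in H2.
  specialize (H2 (O1_refl _ T R) (idem_R_le1 T a Ha Haa)).
  assert (Hm : e T (mul T t R) = mul T t R) by (apply mag_mul_l; auto).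
  assert (H3 : add T t (mul T t R) = t) by (rewrite addC; apply mag_le_add; auto).
  pose proof (AM4 _ T t (one T) R) as H4. rewrite Ht, !mul1r, H3, <- addA, H3 in H4.
  assert (H5 : le T (mul T t (add T (one T) R)) t).
  { rewrite <- Ht at 2. apply absorb_le. rewrite Ht. symmetry. exact H4. }
  apply (O1_trans _ T _ _ _ H H5).
Qed.

Lemma zeroless_u {S} (T : solid S) x : x <> e T x -> u T x <> e T (u T x).
Proof.
  intros Hx H. apply Hx. destruct (M2 _ T x Hx) as [E _].
  rewrite H in E. rewrite <- E. symmetry. apply mag_mul_r. apply e_e.
Qed.

Lemma idem_u {S} (T : solid S) x : x <> e T x -> mul T (u T x) (u T x) = u T x.
Proof. intro Hx. destruct (M2 _ T x Hx) as [E F]. apply F. exact E. Qed.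

Lemma mulAC4 {S} (T : solid S) p q r s :
  mul T q (mul T p (mul T r s)) = mul T (mul T r p) (mul T s q).
Proof.
  rewrite (mulC T r p), <- (mulA T p r), (mulA T q p), (mulC T q p), <- (mulA T p q).
  f_equal. rewrite (mulC T s q), (mulA T q r s), (mulC T q r), <- (mulA T r q s). reflexivity.
Qed.

Lemma mulAC4' {S} (T : solid S) p q r s :
  mul T q (mul T p (mul T r s)) = mul T (mul T r q) (mul T s p).
Proof. rewrite (mulA T q p), (mulC T q p), <- (mulA T p q). apply mulAC4. Qed.

Theorem mainTheorem8 (S : Type) (T : solid S) (x y : S)
  (hx : x <> e T x) (hy : y <> e T y)
  (h : le T (mul T (e T x) y) (mul T (e T y) x)) :
  le T (relunc T x) (relunc T y).
Proof.
  unfold relunc.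
  destruct (excluded_middle_informative (x <> e T x)) as [_|n]; [|contradiction].
  destruct (excluded_middle_informative (y <> e T y)) as [_|n]; [|contradiction].
  pose proof (one_zeroless T x hx) as H1z.
  assert (HA : e T (mul T (e T x) y) = mul T (e T x) y) by apply e_mul_mag.
  assert (HB : e T (mul T (e T y) x) = mul T (e T y) x) by apply e_mul_mag.
  pose proof (mul_le_mags T (inv T x) _ _ HA HB h) as Hm1.
  pose proof (mul_le_mags T (inv T y) _ _ (mag_mul_r T _ _ HA) (mag_mul_r T _ _ HB) Hm1) as Hm2.
  rewrite (mulAC4 T (inv T x) (inv T y) (e T x) y), (mulAC4' T (inv T x) (inv T y) (e T y) x) in Hm2.
  rewrite <- (AM3 _ T x hx), <- (AM3 _ T y hy) in Hm2.
  destruct (M3 _ T x hx) as [Ex _]. destruct (M3 _ T y hy) as [Ey _].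
  rewrite Ex, Ey in Hm2.
  apply (O1_trans _ T _ _ _ (idem_lower T (u T y) (e T (u T x)) H1z (zeroless_u T y hy) (idem_u T y hy) (e_e T _))).
  apply (O1_trans _ T _ _ _ Hm2).
  apply (idem_upper T (u T x) (e T (u T y)) H1z (zeroless_u T x hx) (idem_u T x hx) (e_e T _)).
Qed.
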